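(* Let $(X,f)$ be a dynamical system and $\mathbf{a}=(a_1,\dots,a_r)\in\mathbb{N}^r_*$. The following are equivalent: (1) $(X,f)$ is $\Delta$-$\mathbf{a}$-transitive; (2) $(X,f)$ is $\mathcal{F}[\mathbf{a}]$-point transitive; (3) $Trans_{\mathcal{F}[\mathbf{a}]}(X,f)$ is residual in $X$.
   Context: A dynamical system is a pair $(X,f)$ with $X$ a compact metric space and $f:X\to X$ continuous. $\mathbb{N}=\{1,2,\dots\}$, $\mathbb{Z}_+=\{0,1,2,\dots\}$; $\mathbb{N}^r_*=\{(n_1,\dots,n_r)\in\mathbb{N}^r: n_1<\dots<n_r\}$. $N(x,U)=\{n\in\mathbb{N}: f^n(x)\in U\}$. For a family $\mathcal{F}$ of subsets of $\mathbb{N}$, $x$ is an $\mathcal{F}$-transitive point if $N(x,U)\in\mathcal{F}$ for every non-empty open $U\subset X$; $Trans_{\mathcal{F}}(X,f)$ is the set of such points; $(X,f)$ is $\mathcal{F}$-point transitive if it is non-empty. For a system $(Y,g)$, $y$ is a transitive point if its $\omega$-limit set equals $Y$. $(X,f)$ is $\Delta$-$\mathbf{a}$-transitive if there is $x\in X$ such that $(x,\dots,x)$ is a transitive point of $(X^r,f^{a_1}\times\dots\times f^{a_r})$. $\mathcal{F}[\mathbf{a}]$ is the collection of all $F\subset\mathbb{N}$ such that for every $(n_1,\dots,n_r)\in\mathbb{Z}_+^r$ there is $k\in\mathbb{N}$ with $ka_i+n_i\in F$ for all $i=1,\dots,r$. *)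

(* Defs.v *)
From Stdlib Require Import Reals List.
Open Scope R_scope.

Definition is_metric {X : Type} (d : X -> X -> R) : Prop :=
  (forall x y, 0 <= d x y) /\
  (forall x y, d x y = 0 <-> x = y) /\
  (forall x y, d x y = d y x) /\
  (forall x y z, d x z <= d x y + d y z).

Definition is_open {X : Type} (d : X -> X -> R) (U : X -> Prop) : Prop :=
  forall x, U x -> exists eps, 0 < eps /\ forall y, d x y < eps -> U y.

Definition is_compact {X : Type} (d : X -> X -> R) : Prop :=
  forall (I : Type) (U : I -> X -> Prop),
    (forall i, is_open d (U i)) ->
    (forall x, exists i, U i x) ->
    exists l : list I, forall x, exists i, In i l /\ U i x.

Definition is_continuous {X : Type} (d : X -> X -> R) (f : X -> X) : Prop :=
  forall x eps, 0 < eps -> exists delta, 0 < delta /\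
    forall y, d x y < delta -> d (f x) (f y) < eps.

Definition in_Nr_star (r : nat) (a : nat -> nat) : Prop :=
  (forall i, (i < r)%nat -> (1 <= a i)%nat) /\
  (forall i j, (i < j)%nat -> (j < r)%nat -> (a i < a j)%nat).

Definition hitting_set {X : Type} (f : X -> X) (x : X) (U : X -> Prop) : nat -> Prop :=
  fun n => (1 <= n)%nat /\ U (Nat.iter n f x).

Definition Fa (r : nat) (a : nat -> nat) (F : nat -> Prop) : Prop :=
  forall n : nat -> nat, exists k : nat, (1 <= k)%nat /\
    forall i, (i < r)%nat -> F (k * a i + n i)%nat.

Definition is_F_transitive_point {X : Type} (d : X -> X -> R) (f : X -> X)
  (Fam : (nat -> Prop) -> Prop) (x : X) : Prop :=
  forall U, is_open d U -> (exists y, U y) -> Fam (hitting_set f x U).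

Definition F_point_transitive {X : Type} (d : X -> X -> R) (f : X -> X)
  (Fam : (nat -> Prop) -> Prop) : Prop :=
  exists x, is_F_transitive_point d f Fam x.

Definition is_dense {X : Type} (d : X -> X -> R) (G : X -> Prop) : Prop :=
  forall V, is_open d V -> (exists y, V y) -> exists y, V y /\ G y.

Definition is_residual {X : Type} (d : X -> X -> R) (A : X -> Prop) : Prop :=
  exists G : nat -> X -> Prop,
    (forall m, is_open d (G m)) /\ (forall m, is_dense d (G m)) /\
    (forall x, (forall m, G m x) -> A x).

(* Delta-a-transitivity: (x,...,x) is a transitive point of
   (X^r, f^{a_1} x ... x f^{a_r}), i.e. its omega-limit set is all of X^r.
   X^r carries the (max) product metric; points of X^r are z : nat -> X,
   only the coordinates i < r matter. z lies in the omega-limit set of (x,..,x)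
   iff for every eps > 0 and N there is n >= N with
   d(f^{a_i n} x, z_i) < eps for all i < r. *)
Definition Delta_a_transitive {X : Type} (d : X -> X -> R) (f : X -> X)
  (r : nat) (a : nat -> nat) : Prop :=
  exists x : X, forall z : nat -> X, forall eps, 0 < eps -> forall N : nat,
    exists n : nat, (N <= n)%nat /\
      forall i, (i < r)%nat -> d (Nat.iter (a i * n)%nat f x) (z i) < eps.

(* Main.v *)
Require Import Defs.
From Stdlib Require Import Reals List Lra Lia Classical ClassicalEpsilon Cantor.
Open Scope R_scope.

Lemma iter_add {X} (f : X -> X) m n x :
  Nat.iter (m + n) f x = Nat.iter m f (Nat.iter n f x).
Proof. induction m; simpl; congruence. Qed.

Lemma mychoice {A B : Type} (P : A -> B -> Prop) :
  (forall a, exists b, P a b) -> exists g : A -> B, forall a, P a (g a).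
Proof.
  intro H. exists (fun a => proj1_sig (constructive_indefinite_description _ (H a))).
  intro a. exact (proj2_sig (constructive_indefinite_description _ (H a))).
Qed.

Lemma fin_min (r : nat) (P : nat -> R -> Prop) :
  (forall i e e', 0 < e' <= e -> P i e -> P i e') ->
  (forall i, (i < r)%nat -> exists e, 0 < e /\ P i e) ->
  exists e, 0 < e /\ forall i, (i < r)%nat -> P i e.
Proof.
  intros Hm. induction r as [|r IH]; intro H.
  - exists 1; split; [lra|intros; lia].
  - destruct IH as [e1 [He1 H1]]. { intros i Hi; apply H; lia. }
    destruct (H r ltac:(lia)) as [e2 [He2 H2]].
    exists (Rmin e1 e2); split. { apply Rmin_glb_lt; auto. }
    intros i Hi. destruct (Nat.eq_dec i r) as [->|Hne].
    + apply (Hm r e2); auto. split; [apply Rmin_glb_lt; auto| apply Rmin_r].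
    + apply (Hm i e1); [split; [apply Rmin_glb_lt; auto| apply Rmin_l]|apply H1; lia].
Qed.

Lemma open_fin_inter {X} (d : X -> X -> R) (r : nat) (W : nat -> X -> Prop) :
  (forall i, (i < r)%nat -> is_open d (W i)) ->
  is_open d (fun y => forall i, (i < r)%nat -> W i y).
Proof.
  intros HW x Hx.
  destruct (fin_min r (fun i e => forall y, d x y < e -> W i y)) as [e [He H]].
  - intros i e e' He' Hp y Hy. apply Hp. lra.
  - intros i Hi. exact (HW i Hi x (Hx i Hi)).
  - exists e; split; auto.
Qed.

Lemma iter_cont {X} (d : X -> X -> R) f n :
  is_continuous d f -> is_continuous d (Nat.iter n f).
Proof.
  intro Hf. induction n as [|n IH]; intros x eps He.
  - exists eps; split; auto.
  - simpl. destruct (Hf (Nat.iter n f x) eps He) as [d1 [Hd1 H1]].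
    destruct (IH x d1 Hd1) as [d2 [Hd2 H2]].
    exists d2; split; auto.
Qed.

Lemma open_preim {X} (d : X -> X -> R) (g : X -> X) U :
  is_continuous d g -> is_open d U -> is_open d (fun w => U (g w)).
Proof.
  intros Hg HU x Hx. destruct (HU _ Hx) as [e [He H]].
  destruct (Hg x e He) as [dl [Hdl H2]]. exists dl; split; auto.
Qed.

Lemma ball_open {X} (d : X -> X -> R) c e : is_metric d ->
  is_open d (fun y => d c y < e).
Proof.
  intros [H0 [H1 [H2 H3]]] x Hx. exists (e - d c x); split; [lra|].
  intros y Hy. pose proof (H3 c x y). lra.
Qed.

Lemma iter_eq {X} (f : X -> X) m n x : m = n -> Nat.iter m f x = Nat.iter n f x.
Proof. intros ->; reflexivity. Qed.

Lemma d12 (X : Type) (d : X -> X -> R) (Hd : is_metric d)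
  (f : X -> X) (Hf : is_continuous d f) (r : nat) (a : nat -> nat) (Ha : in_Nr_star r a) :
  Delta_a_transitive d f r a -> F_point_transitive d f (Fa r a).
Proof.
  intros [x Hx]. exists x. intros U HU [y Uy] n.
  destruct Hd as [Hd0 [Hd1 [Hds Hdt]]]. destruct Ha as [Ha1 Ha2].
  assert (Hz : forall i, exists z, (i < r)%nat -> U (Nat.iter (n i) f z)).
  { intro i. destruct (Compare_dec.lt_dec i r) as [Hi|Hi]; [|exists x; intro; lia].
    destruct (HU y Uy) as [e [He Hy]].
    destruct (Hx (fun _ => y) e He (n i)) as [m [Hm Hdd]].
    specialize (Hdd i Hi). simpl in Hdd.
    exists (Nat.iter (a i * m - n i)%nat f x). intros _.
    rewrite <- iter_add.
    assert (Hai := Ha1 i Hi).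
    rewrite (iter_eq f _ (a i * m)%nat) by nia.
    apply Hy. rewrite Hds. exact Hdd. }
  destruct (mychoice _ Hz) as [z Hzz].
  destruct (fin_min r (fun i e => forall w, d (z i) w < e -> U (Nat.iter (n i) f w))) as [e [He Hall]].
  - intros i e e' He' Hp w Hw. apply Hp. lra.
  - intros i Hi. exact (open_preim d _ U (iter_cont d f (n i) Hf) HU (z i) (Hzz i Hi)).
  - destruct (Hx z e He 1%nat) as [m [Hm Hdd]].
    exists m. split; [lia|]. intros i Hi. split.
    + assert (Hai := Ha1 i Hi). nia.
    + rewrite (iter_eq f _ (n i + a i * m)%nat) by nia. rewrite iter_add.
      apply Hall; auto. rewrite Hds. apply Hdd; auto.
Qed.

Lemma fin_bound (r : nat) (m : nat -> nat) : exists c, forall i, (i < r)%nat -> (m i <= c)%nat.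
Proof.
  induction r as [|r [c Hc]]. - exists 0%nat; intros; lia.
  - exists (c + m r)%nat. intros i Hi. destruct (Nat.eq_dec i r) as [->|]; [lia|].
    specialize (Hc i ltac:(lia)). lia.
Qed.

Lemma d21 (X : Type) (d : X -> X -> R) (Hd : is_metric d)
  (f : X -> X) (Hf : is_continuous d f) (r : nat) (a : nat -> nat) (Ha : in_Nr_star r a) :
  F_point_transitive d f (Fa r a) -> Delta_a_transitive d f r a.
Proof.
  intros [x Hx]. exists x. intros z eps He N.
  pose proof Hd as [Hd0 [Hd1 [Hds Hdt]]]. destruct Ha as [Ha1 Ha2].
  assert (Hm : forall i, exists m, (i < r)%nat -> d (z i) (Nat.iter m f x) < eps).
  { intro i. destruct (Compare_dec.lt_dec i r) as [Hi|Hi]; [|exists 0%nat; intro; lia].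
    destruct (Hx (fun v => d (z i) v < eps) (ball_open d _ _ Hd) ltac:(exists (z i); rewrite (proj2 (Hd1 _ _) eq_refl); lra) (fun _ => 0%nat)) as [k [Hk Hk2]].
    exists (k * a i + 0)%nat. intros _. apply (Hk2 i Hi). }
  destruct (mychoice _ Hm) as [m Hmm].
  destruct (fin_bound r m) as [c Hc].
  set (C := (c + N)%nat).
  set (W := fun w => forall i, (i < r)%nat -> d (z i) (Nat.iter (m i) f w) < eps).
  assert (HW : is_open d W).
  { apply open_fin_inter. intros i Hi.
    apply (open_preim d _ (fun v => d (z i) v < eps)); [apply iter_cont; auto| apply ball_open; auto]. }
  destruct (Hx W HW ltac:(exists x; intros i Hi; apply Hmm; auto) (fun i => a i * C - m i)%nat) as [k [Hk Hk2]].
  exists (k + C)%nat. split; [unfold C; lia|].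
  intros i Hi. destruct (Hk2 i Hi) as [_ HWi]. specialize (HWi i Hi).
  rewrite <- iter_add in HWi. rewrite Hds.
  assert (Hai := Ha1 i Hi). assert (Hci := Hc i Hi).
  rewrite (iter_eq f _ (m i + (k * a i + (a i * C - m i)))%nat); [exact HWi|].
  unfold C in *. nia.
Qed.

Lemma list_max (l : list nat) : exists M, forall i, In i l -> (i <= M)%nat.
Proof.
  induction l as [|h t [M HM]]. - exists 0%nat; intros i [].
  - exists (h + M)%nat. intros i [->|Hi]; [lia|]. specialize (HM i Hi); lia.
Qed.

Lemma baire (X : Type) (d : X -> X -> R) (x0 : X) (Hd : is_metric d) (Hc : is_compact d)
  (G : nat -> X -> Prop) : (forall m, is_open d (G m)) -> (forall m, is_dense d (G m)) ->
  exists x, forall m, G m x.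
Proof.
  intros HGo HGd. pose proof Hd as [Hd0 [Hd1 [Hds Hdt]]].
  assert (Hst : forall (p : nat * (X * R)), exists q : X * R,
    0 < snd (snd p) -> 0 < snd q /\ forall w, d (fst q) w <= snd q ->
      d (fst (snd p)) w < snd (snd p) /\ G (fst p) w).
  { intros [m [c e]]. simpl. destruct (Rlt_dec 0 e) as [He|He]; [|exists (c,e); intro; lra].
    destruct (HGd m (fun w => d c w < e) (ball_open d c e Hd)
      ltac:(exists c; rewrite (proj2 (Hd1 _ _) eq_refl); lra)) as [y [Hy1 Hy2]].
    destruct (open_fin_inter d 2 (fun i w => match i with 0%nat => d c w < e | _ => G m w end))
      with (x := y) as [e' [He' H']].
    - intros [|i] _; [apply ball_open; auto| apply HGo].
    - intros [|i] _; auto.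
    - exists (y, e' / 2). intros _. simpl. split; [lra|]. intros w Hw.
      split; [apply (H' w ltac:(lra) 0%nat ltac:(lia)) | apply (H' w ltac:(lra) 1%nat ltac:(lia))]. }
  destruct (mychoice _ Hst) as [step Hstep].
  set (s := fix s (m : nat) : X * R := match m with 0%nat => (x0, 1) | S m => step (m, s m) end).
  assert (Hpos : forall m, 0 < snd (s m)).
  { induction m; simpl; [lra|]. apply (Hstep (m, s m) IHm). }
  assert (Hnext : forall m w, d (fst (s (S m))) w <= snd (s (S m)) ->
     d (fst (s m)) w < snd (s m) /\ G m w).
  { intros m w. apply (Hstep (m, s m) (Hpos m)). }
  assert (Hnest : forall m p w, (m <= p)%nat -> d (fst (s p)) w <= snd (s p) ->
     d (fst (s m)) w <= snd (s m)).
  { intros m p w Hmp. induction Hmp; auto. intro H. apply IHHmp.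
    left. apply (Hnext m0 w H). }
  destruct (classic (exists x, forall m, d (fst (s m)) x <= snd (s m))) as [[x Hx]|Hno].
  - exists x. intro m. apply (Hnext m x (Hx (S m))).
  - destruct (Hc nat (fun m x => snd (s m) < d (fst (s m)) x)) as [l Hl].
    + intro m. intros x Hx. exists (d (fst (s m)) x - snd (s m)). split; [lra|].
      intros y Hy. pose proof (Hdt (fst (s m)) y x). pose proof (Hds x y). lra.
    + intro x. apply NNPP. intro Hn. apply Hno. exists x. intro m.
      apply Rnot_lt_le. intro Hlt. apply Hn. exists m; auto.
    + destruct (list_max l) as [M HM].
      destruct (Hl (fst (s M))) as [i [Hi1 Hi2]].
      assert (HH := Hnest i M (fst (s M)) (HM i Hi1)).
      rewrite (proj2 (Hd1 _ _) eq_refl) in HH. specialize (HH ltac:(left; apply Hpos)). lra.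
Qed.

Fixpoint vdec (r : nat) (p : nat) : nat -> nat :=
  match r with
  | 0%nat => fun _ => 0%nat
  | S r => fun i => match i with 0%nat => fst (of_nat p) | S i => vdec r (snd (of_nat p)) i end
  end.

Lemma vdec_surj r (n : nat -> nat) : exists p, forall i, (i < r)%nat -> vdec r p i = n i.
Proof.
  revert n. induction r as [|r IH]; intro n. - exists 0%nat; intros; lia.
  - destruct (IH (fun i => n (S i))) as [p Hp]. exists (to_nat (n 0%nat, p)).
    intros [|i] Hi; cbn [vdec]; rewrite cancel_of_to; cbn [fst snd]; auto. apply Hp; lia.
Qed.

Definition rad (p : nat) : R := / (INR (fst (of_nat p)) + 1).

Lemma rad_pos p : 0 < rad p.
Proof. unfold rad. apply Rinv_0_lt_compat. pose proof (pos_INR (fst (of_nat p))). lra. Qed.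

Lemma dense_seq (X : Type) (d : X -> X -> R) (x0 : X) (Hd : is_metric d) (Hc : is_compact d) :
  exists C : nat -> X, forall U, is_open d U -> forall y, U y ->
    exists p, forall w, d (C p) w < rad p -> U w.
Proof.
  pose proof Hd as [Hd0 [Hd1 [Hds Hdt]]].
  assert (HL : forall m : nat, exists l : list X, forall y, exists c, In c l /\ d c y < / (INR m + 1)).
  { intro m. apply (Hc X (fun c y => d c y < / (INR m + 1))).
    - intro c. apply ball_open; auto.
    - intro x. exists x. rewrite (proj2 (Hd1 _ _) eq_refl).
      apply Rinv_0_lt_compat. pose proof (pos_INR m). lra. }
  destruct (mychoice _ HL) as [L HLs].
  exists (fun p => nth (snd (of_nat p)) (L (fst (of_nat p))) x0).
  intros U HU y Uy. destruct (HU y Uy) as [e [He Hy]].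
  destruct (archimed_cor1 (e/2) ltac:(lra)) as [N [HN HN0]].
  destruct (HLs N y) as [c [Hc1 Hc2]].
  destruct (In_nth _ _ x0 Hc1) as [j [_ Hj]].
  exists (to_nat (N, j)). unfold rad. rewrite cancel_of_to. simpl. rewrite Hj.
  assert (Hr : / (INR N + 1) <= / INR N).
  { apply Rinv_le_contravar; [apply lt_0_INR; auto| lra]. }
  intros w Hw. apply Hy. pose proof (Hdt y c w). pose proof (Hds y c). lra.
Qed.

Lemma d23 (X : Type) (d : X -> X -> R) (x0 : X) (Hd : is_metric d) (Hc : is_compact d)
  (f : X -> X) (Hf : is_continuous d f) (r : nat) (a : nat -> nat) (Ha : in_Nr_star r a) :
  F_point_transitive d f (Fa r a) -> is_residual d (is_F_transitive_point d f (Fa r a)).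
Proof.
  intros [x Hx]. pose proof Hd as [Hd0 [Hd1 [Hds Hdt]]]. destruct Ha as [Ha1 Ha2].
  destruct (dense_seq X d x0 Hd Hc) as [C HC].
  assert (Bne : forall b, exists y, d (C b) y < rad b).
  { intro b. exists (C b). rewrite (proj2 (Hd1 _ _) eq_refl). apply rad_pos. }
  set (G := fun q y => exists k, (1 <= k)%nat /\ forall i, (i < r)%nat ->
     d (C (fst (of_nat q))) (Nat.iter (k * a i + vdec r (snd (of_nat q)) i) f y) < rad (fst (of_nat q))).
  exists G. split; [|split].
  - intros q y [k [Hk Hy]].
    destruct (open_fin_inter d r (fun i w => d (C (fst (of_nat q))) (Nat.iter (k * a i + vdec r (snd (of_nat q)) i) f w) < rad (fst (of_nat q)))) with (x := y) as [e [He He2]].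
    + intros i Hi. exact (open_preim d _ (fun v => d (C (fst (of_nat q))) v < rad (fst (of_nat q))) (iter_cont d f _ Hf) (ball_open d _ _ Hd)).
    + exact Hy.
    + exists e; split; auto. intros w Hw. exists k; split; auto.
  - intros q V HV [v Vv]. destruct r as [|r'].
    + exists v; split; auto. exists 1%nat; split; [lia| intros; lia].
    + destruct (Hx V HV (ex_intro _ v Vv) (fun _ => 0%nat)) as [k0 [Hk0 Hk0']].
      destruct (Hk0' 0%nat ltac:(lia)) as [_ Vt].
      set (t := (k0 * a 0%nat + 0)%nat) in *.
      exists (Nat.iter t f x). split; auto.
      destruct (Hx _ (ball_open d _ _ Hd) (Bne (fst (of_nat q)))
         (fun i => vdec (S r') (snd (of_nat q)) i + t)%nat) as [k [Hk Hk']].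
      exists k. split; auto. intros i Hi. destruct (Hk' i Hi) as [_ H].
      rewrite <- iter_add. rewrite (iter_eq f _ (k * a i + (vdec (S r') (snd (of_nat q)) i + t))%nat); auto. lia.
  - intros y Hy U HU [u Uu] n.
    destruct (HC U HU u Uu) as [b Hb]. destruct (vdec_surj r n) as [p Hp].
    destruct (Hy (to_nat (b, p))) as [k [Hk Hk']]. rewrite cancel_of_to in Hk'. simpl in Hk'.
    exists k. split; auto. intros i Hi. split.
    + assert (Hai := Ha1 i Hi). nia.
    + rewrite <- (Hp i Hi). apply Hb. apply Hk'; auto.
Qed.

Lemma d32 (X : Type) (d : X -> X -> R) (x0 : X) (Hd : is_metric d) (Hc : is_compact d)
  (f : X -> X) (r : nat) (a : nat -> nat) :
  is_residual d (is_F_transitive_point d f (Fa r a)) -> F_point_transitive d f (Fa r a).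
Proof.
  intros [G [Ho [Hdn Hi]]]. destruct (baire X d x0 Hd Hc G Ho Hdn) as [x Hx].
  exists x. apply Hi. exact Hx.
Qed.

Theorem theorem5p6 (X : Type) (d : X -> X -> R) (x0 : X)
  (Hd : is_metric d) (Hc : is_compact d)
  (f : X -> X) (Hf : is_continuous d f)
  (r : nat) (a : nat -> nat) (Ha : in_Nr_star r a) :
  (Delta_a_transitive d f r a <-> F_point_transitive d f (Fa r a)) /\
  (F_point_transitive d f (Fa r a) <->
     is_residual d (is_F_transitive_point d f (Fa r a))).
Proof.
  split; split.
  - apply d12; auto.
  - apply d21; auto.
  - apply (d23 X d x0); auto.
  - apply (d32 X d x0); auto.
Qed.
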